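(* Let $A$ be a differential ring and let $(A_\alpha)_{\alpha\in I}$ be a direct system (over a directed set $I$) of differential $A$-algebras with structure differential homomorphisms $\nu_\alpha\colon A\to A_\alpha$ compatible with the transition maps. Suppose that for every $\alpha$ the contraction map $\nu_\alpha^*\colon\operatorname{Spec}^\Delta A_\alpha\to\operatorname{Spec}^\Delta A$ is a homeomorphism. Let $A'=\varinjlim_\alpha A_\alpha$ and let $\nu\colon A\to A'$ be the induced homomorphism. Then $\nu^*\colon\operatorname{Spec}^\Delta A'\to\operatorname{Spec}^\Delta A$ is a homeomorphism.
   Context: All rings are commutative with unit; homomorphisms preserve the unit. A differential ring is a ring equipped with finitely many pairwise commuting derivations; a differential homomorphism is a ring homomorphism commuting with the derivations. For a differential ring $A$, $\operatorname{Spec}^\Delta A$ is the set of prime ideals of $A$ closed under all the derivations, with the Kolchin topology whose closed sets are $V(E)=\{\mathfrak p\in\operatorname{Spec}^\Delta A: E\subseteq\mathfrak p\}$ for $E\subseteq A$. For a differential homomorphism $f\colon A\to B$, $f^*\colon\operatorname{Spec}^\Delta B\to\operatorname{Spec}^\Delta A$ is $f^*(\mathfrak q)=f^{-1}(\mathfrak q)$. *)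

(* Defs.v *)
From HB Require Import structures.
From mathcomp Require Import all_boot all_order all_algebra.
Set Implicit Arguments. Unset Strict Implicit. Unset Printing Implicit Defensive.
Import GRing.Theory.
Local Open Scope ring_scope.

Definition is_derivation (R : comPzRingType) (d : R -> R) : Prop :=
  (forall x y : R, d (x + y) = d x + d y) /\
  (forall x y : R, d (x * y) = d x * y + x * d y).

(* A differential ring with m pairwise commuting derivations (indexed by 'I_m).
   Rings are commutative with unit; the zero ring is allowed. *)
Record dring (m : nat) := DRing {
  dcarrier :> comPzRingType;
  der : 'I_m -> dcarrier -> dcarrier;
  der_deriv : forall i, is_derivation (der i);
  der_comm : forall i j (x : dcarrier), der i (der j x) = der j (der i x)
}.
Arguments der {m} _ _ _.

Definition is_dhom (m : nat) (A B : dring m) (f : {rmorphism A -> B}) : Prop :=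
  forall (i : 'I_m) (x : A), f (der A i x) = der B i (f x).

Definition is_dprime (m : nat) (A : dring m) (P : A -> Prop) : Prop :=
  [/\ P 0,
      (forall x y, P x -> P y -> P (x + y)),
      (forall a x, P x -> P (a * x)),
      ~ P 1 &
      (forall x y, P (x * y) -> P x \/ P y)] /\
  (forall i x, P x -> P (der A i x)).

Definition dSpec (m : nat) (A : dring m) := {P : A -> Prop | is_dprime P}.

Definition kclosed (m : nat) (A : dring m) (C : dSpec A -> Prop) : Prop :=
  exists E : A -> Prop, forall p : dSpec A, C p <-> (forall x, E x -> sval p x).

Definition kcontinuous (m : nat) (A B : dring m) (g : dSpec B -> dSpec A) : Prop :=
  forall C : dSpec A -> Prop, kclosed C -> kclosed (fun q => C (g q)).

Definition khomeo (m : nat) (A B : dring m) (g : dSpec B -> dSpec A) : Prop :=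
  exists h : dSpec A -> dSpec B,
    [/\ cancel g h, cancel h g, kcontinuous g & kcontinuous h].

Lemma comap_dprime (m : nat) (A B : dring m) (f : {rmorphism A -> B})
  (hf : is_dhom f) (Q : B -> Prop) :
  is_dprime Q -> is_dprime (fun x => Q (f x)).
Proof.
case=> [[Q0 QD QM Q1 QP] Qd]; split; first split => /=.
- by rewrite rmorph0.
- by move=> x y Hx Hy; rewrite rmorphD; apply: QD.
- by move=> a x Hx; rewrite rmorphM; apply: QM.
- by rewrite rmorph1.
- by move=> x y; rewrite rmorphM; apply: QP.
- by move=> i x Hx; rewrite hf; apply: Qd.
Qed.

Definition comap (m : nat) (A B : dring m) (f : {rmorphism A -> B})
  (hf : is_dhom f) (q : dSpec B) : dSpec A :=
  exist _ (fun x => sval q (f x)) (comap_dprime hf (svalP q)).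

Definition directed_set (I : Type) (le : I -> I -> Prop) : Prop :=
  [/\ inhabited I, (forall a, le a a), (forall a b c, le a b -> le b c -> le a c)
    & (forall a b, exists c, le a c /\ le b c)].

Definition direct_system (m : nat) (I : Type) (le : I -> I -> Prop)
  (As : I -> dring m) (phi : forall a b, le a b -> {rmorphism As a -> As b}) : Prop :=
  [/\ (forall a b (h : le a b), is_dhom (phi a b h)),
      (forall a (h : le a a) x, phi a a h x = x)
    & (forall a b c (hab : le a b) (hbc : le b c) (hac : le a c) x,
         phi b c hbc (phi a b hab x) = phi a c hac x)].

Definition is_dcolimit (m : nat) (I : Type) (le : I -> I -> Prop)
  (As : I -> dring m) (phi : forall a b, le a b -> {rmorphism As a -> As b})
  (A' : dring m) (iota : forall a, {rmorphism As a -> A'}) : Prop :=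
  [/\ (forall a, is_dhom (iota a)),
      (forall a b (h : le a b) x, iota b (phi a b h x) = iota a x)
    & (forall (B : dring m) (g : forall a, {rmorphism As a -> B}),
         (forall a, is_dhom (g a)) ->
         (forall a b (h : le a b) x, g b (phi a b h x) = g a x) ->
         exists u : {rmorphism A' -> B},
           [/\ is_dhom u, (forall a x, u (iota a x) = g a x)
             & (forall u' : {rmorphism A' -> B},
                  (forall a x, u' (iota a x) = g a x) -> forall y, u' y = u y)])].

(* Main.v *)
Require Import Defs.
From HB Require Import structures.
From mathcomp Require Import all_boot all_order all_algebra.
From Stdlib Require Import ClassicalEpsilon FunctionalExtensionality PropExtensionality ProofIrrelevance.
Set Implicit Arguments. Unset Strict Implicit. Unset Printing Implicit Defensive.
Import GRing.Theory.
Local Open Scope ring_scope.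

Definition ceq (T : Type) (x y : T) : bool :=
  if excluded_middle_informative (x = y) then true else false.
Lemma ceqP (T : Type) : Equality.axiom (@ceq T).
Proof. move=> x y; rewrite /ceq; case: excluded_middle_informative => h; by constructor. Qed.

Definition cfind (T : Type) (P : pred T) (n : nat) : option T :=
  match excluded_middle_informative (exists x, P x) with
  | left h => Some (proj1_sig (constructive_indefinite_description _ h))
  | right _ => None end.
Lemma cfind_correct T (P : pred T) n x : cfind P n = Some x -> P x.
Proof. rewrite /cfind; case: excluded_middle_informative => // h [<-].
exact: proj2_sig (constructive_indefinite_description _ h). Qed.
Lemma cfind_complete T (P : pred T) : (exists x, P x) -> exists n, cfind P n.
Proof. move=> h; exists 0%N; rewrite /cfind; by case: excluded_middle_informative. Qed.
Lemma cfind_ext T (P Q : pred T) : P =1 Q -> cfind P =1 cfind Q.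
Proof. move=> h; have -> : P = Q by apply: functional_extensionality. by []. Qed.

Unset Implicit Arguments.
Section Colim.
Variables (m : nat) (I : Type) (le : I -> I -> Prop) (As : I -> dring m)
  (phi : forall a b, le a b -> {rmorphism As a -> As b}).
Hypothesis Hd : directed_set le.
Hypothesis Hs : direct_system phi.

Lemma le_refl a : le a a. Proof. by case: Hd. Qed.
Lemma le_trans {a b c} : le a b -> le b c -> le a c. Proof. case: Hd => _ _ H _; exact: H. Qed.
Lemma le_ub a b : exists c, le a c /\ le b c. Proof. by case: Hd. Qed.

Lemma phi_id {a} (h : le a a) x : phi a a h x = x. Proof. by case: Hs => _ H _; apply: H. Qed.
Lemma phi_comp {a b c} hab hbc hac x : phi b c hbc (phi a b hab x) = phi a c hac x.
Proof. by case: Hs => _ _ H; apply: H. Qed.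
Lemma phi_pi {a b} (h1 h2 : le a b) x : phi a b h1 x = phi a b h2 x.
Proof. by rewrite -(phi_comp h1 (le_refl b) h2) phi_id. Qed.
Lemma phi_der {a b} h i x : phi a b h (der _ i x) = der _ i (phi a b h x).
Proof. by case: Hs => H _ _; apply: H. Qed.

Definition rel (a : I) (x : As a) (b : I) (y : As b) : Prop :=
  exists c (hac : le a c) (hbc : le b c), phi a c hac x = phi b c hbc y.
Arguments rel : clear implicits.

Lemma rel_refl {a} x : rel a x a x.
Proof. by exists a, (le_refl a), (le_refl a). Qed.
Lemma rel_sym {a x b y} : rel a x b y -> rel b y a x.
Proof. by case=> c [h1 [h2 e]]; exists c, h2, h1. Qed.
Lemma rel_trans {a x b y c z} : rel a x b y -> rel b y c z -> rel a x c z.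
Proof.
case=> d [had [hbd e1]] [e [hbe [hce e2]]].
have [f [hdf hef]] := le_ub d e.
exists f, (le_trans had hdf), (le_trans hce hef).
have hbf := le_trans hbe hef.
rewrite -(phi_comp had hdf (le_trans had hdf)) e1 (phi_comp hbd hdf hbf).
by rewrite -(phi_comp hbe hef hbf) e2; apply: phi_comp.
Qed.
Lemma rel_lift {a b} h x : rel a x b (phi a b h x).
Proof. exists b, h, (le_refl b); by rewrite phi_id. Qed.

Record C := MkC { cval : forall b, As b -> Prop; cprop : exists a x, cval = rel a x }.
Definition cl a x : C := @MkC (rel a x) (ex_intro _ a (ex_intro _ x erefl)).

Lemma C_ext {c1 c2} : cval c1 = cval c2 -> c1 = c2.
Proof.
case: c1 c2 => v1 p1 [v2 p2] /= e; subst v2; f_equal; exact: proof_irrelevance.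
Qed.

Lemma clP {a x b y} : cl a x = cl b y <-> rel a x b y.
Proof.
split.
- move=> /(f_equal cval) /= e; rewrite e; exact: rel_refl.
- move=> r; apply: C_ext => /=.
  apply: functional_extensionality_dep => c; apply: functional_extensionality => z.
  apply: propositional_extensionality; split => H.
  + exact: rel_trans (rel_sym r) H.
  + exact: rel_trans r H.
Qed.

Lemma cl_lift {a b} h x : cl b (phi a b h x) = cl a x.
Proof. apply/clP; apply: rel_sym; exact: rel_lift. Qed.

Lemma C_case c : exists a x, c = cl a x.
Proof. case: c => v [a [x e]]; exists a, x; apply: C_ext => /=; exact: e. Qed.

Lemma C_case_at d c : exists e (h : le d e) z, c = cl e z.
Proof.
have [a [x ->]] := C_case c; have [e [hae hde]] := le_ub a d.
by exists e, hde, (phi a e hae x); rewrite cl_lift.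
Qed.

Lemma C_ind1 (P : C -> Prop) : (forall d z, P (cl d z)) -> forall c, P c.
Proof. move=> H c; have [a [x ->]] := C_case c; exact: H. Qed.

Lemma C_ind2 (P : C -> C -> Prop) : (forall d z1 z2, P (cl d z1) (cl d z2)) -> forall c1 c2, P c1 c2.
Proof.
move=> H c1 c2; have [a [x ->]] := C_case c1; have [e [h [z ->]]] := C_case_at a c2.
rewrite -(cl_lift h); exact: H.
Qed.

Lemma C_ind3 (P : C -> C -> C -> Prop) :
  (forall d z1 z2 z3, P (cl d z1) (cl d z2) (cl d z3)) -> forall c1 c2 c3, P c1 c2 c3.
Proof.
move=> H c1 c2 c3; have [a [x ->]] := C_case c1; have [e [h [z ->]]] := C_case_at a c2.
have [f [h' [w ->]]] := C_case_at e c3.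
rewrite -(cl_lift h) -(cl_lift h' (phi a e h x)) -(cl_lift h' z); exact: H.
Qed.

Lemma cl_same {d z1 z2} : cl d z1 = cl d z2 -> exists e (h : le d e), phi d e h z1 = phi d e h z2.
Proof. by move/clP=> [c [h1 [h2 E]]]; exists c, h1; rewrite E (phi_pi h2 h1). Qed.

Lemma pair_ex (c1 c2 : C) : exists t : {d : I & (As d * As d)%type},
  c1 = cl (tag t) (tagged t).1 /\ c2 = cl (tag t) (tagged t).2.
Proof. by move: c1 c2; apply: C_ind2 => d z1 z2; exists (Tagged (fun d => (As d * As d)%type) (z1, z2)). Qed.

Definition pair_at c1 c2 := constructive_indefinite_description _ (pair_ex c1 c2).

Section Lift.
Variable op : forall a, As a -> As a -> As a.
Hypothesis Hop : forall a b h x y, phi a b h (op a x y) = op b (phi a b h x) (phi a b h y).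

Definition lift2 (c1 c2 : C) : C :=
  let t := sval (pair_at c1 c2) in cl (tag t) (op _ (tagged t).1 (tagged t).2).

Lemma lift2_same {e u1 u2 v1 v2} : cl e u1 = cl e v1 -> cl e u2 = cl e v2 ->
  cl e (op e u1 u2) = cl e (op e v1 v2).
Proof.
move=> /cl_same [f1 [h1 E1]] /cl_same [f2 [h2 E2]].
have [g [hg1 hg2]] := le_ub f1 f2.
have hg := le_trans h1 hg1.
rewrite -(cl_lift hg (op e u1 u2)) -(cl_lift hg (op e v1 v2)) !Hop.
rewrite -(phi_comp h1 hg1 hg u1) -(phi_comp h1 hg1 hg v1) E1.
rewrite -(phi_comp h2 hg2 hg u2) -(phi_comp h2 hg2 hg v2) E2.
by [].
Qed.

Lemma lift2_wd {d z1 z2 d' w1 w2} : cl d z1 = cl d' w1 -> cl d z2 = cl d' w2 ->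
  cl d (op d z1 z2) = cl d' (op d' w1 w2).
Proof.
have [e [h h']] := le_ub d d'.
rewrite -(cl_lift h (op d z1 z2)) -(cl_lift h' (op d' w1 w2)) !Hop.
rewrite -(cl_lift h z1) -(cl_lift h z2) -(cl_lift h' w1) -(cl_lift h' w2).
exact: lift2_same.
Qed.

Lemma lift2E d z1 z2 : lift2 (cl d z1) (cl d z2) = cl d (op d z1 z2).
Proof.
rewrite /lift2; case: (pair_at _ _) => t [E1 E2] /=.
by apply: lift2_wd; rewrite -?E1 -?E2.
Qed.
End Lift.

Lemma i0_ex : exists _ : I, True. Proof. by case: Hd => [[a]] _ _ _; exists a. Qed.
Definition i0 : I := sval (constructive_indefinite_description _ i0_ex).

Lemma constE (k : forall a, As a) (Hk : forall a b h, phi a b h (k a) = k b) d :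
  cl i0 (k i0) = cl d (k d).
Proof.
have [e [h h']] := le_ub i0 d.
by rewrite -(cl_lift h) -(cl_lift h') !Hk.
Qed.

Definition Cadd := lift2 (fun a (x y : As a) => x + y).
Definition Cmul := lift2 (fun a (x y : As a) => x * y).
Definition Copp (c : C) := lift2 (fun a (x _ : As a) => - x) c c.
Definition Czero := cl i0 0.
Definition Cone := cl i0 1.

Lemma addE d z1 z2 : Cadd (cl d z1) (cl d z2) = cl d (z1 + z2).
Proof. apply: lift2E => *; exact: rmorphD. Qed.
Lemma mulE d z1 z2 : Cmul (cl d z1) (cl d z2) = cl d (z1 * z2).
Proof. apply: lift2E => *; exact: rmorphM. Qed.
Lemma oppE d z : Copp (cl d z) = cl d (- z).
Proof. rewrite /Copp; apply: (lift2E (fun a (x _ : As a) => - x)) => *; exact: rmorphN. Qed.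
Lemma zeroE d : Czero = cl d 0.
Proof. apply: (constE (fun a => 0)) => *; exact: rmorph0. Qed.
Lemma oneE d : Cone = cl d 1.
Proof. apply: (constE (fun a => 1)) => *; exact: rmorph1. Qed.

Lemma CaddA : associative Cadd.
Proof. by move=> c1 c2 c3; move: c1 c2 c3; apply: C_ind3 => d x y z; rewrite !addE addrA. Qed.
Lemma CaddC : commutative Cadd.
Proof. by move=> c1 c2; move: c1 c2; apply: C_ind2 => d x y; rewrite !addE addrC. Qed.
Lemma Cadd0 : left_id Czero Cadd.
Proof. by move=> c1; move: c1; apply: C_ind1 => d x; rewrite (zeroE d) addE add0r. Qed.
Lemma CaddN : left_inverse Czero Copp Cadd.
Proof. by move=> c1; move: c1; apply: C_ind1 => d x; rewrite (zeroE d) oppE addE addNr. Qed.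
Lemma CmulA : associative Cmul.
Proof. by move=> c1 c2 c3; move: c1 c2 c3; apply: C_ind3 => d x y z; rewrite !mulE mulrA. Qed.
Lemma CmulC : commutative Cmul.
Proof. by move=> c1 c2; move: c1 c2; apply: C_ind2 => d x y; rewrite !mulE mulrC. Qed.
Lemma Cmul1 : left_id Cone Cmul.
Proof. by move=> c1; move: c1; apply: C_ind1 => d x; rewrite (oneE d) mulE mul1r. Qed.
Lemma CmulDl : left_distributive Cmul Cadd.
Proof. by move=> c1 c2 c3; move: c1 c2 c3; apply: C_ind3 => d x y z; rewrite !(addE, mulE) mulrDl. Qed.

HB.instance Definition _ := hasDecEq.Build C (@ceqP C).
HB.instance Definition _ := hasChoice.Build C (@cfind_correct C) (@cfind_complete C) (@cfind_ext C).
HB.instance Definition _ := GRing.isZmodule.Build C CaddA CaddC Cadd0 CaddN.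
HB.instance Definition _ := GRing.Zmodule_isComPzRing.Build C CmulA CmulC Cmul1 CmulDl.

Lemma clD d z1 z2 : cl d z1 + cl d z2 = cl d (z1 + z2). Proof. exact: addE. Qed.
Lemma clM d z1 z2 : cl d z1 * cl d z2 = cl d (z1 * z2). Proof. exact: mulE. Qed.
Lemma clN d z : - cl d z = cl d (- z). Proof. exact: oppE. Qed.
Lemma cl0 d : 0 = cl d 0 :> C. Proof. exact: zeroE. Qed.
Lemma cl1 d : 1 = cl d 1 :> C. Proof. exact: oneE. Qed.
Lemma clB d z1 z2 : cl d z1 - cl d z2 = cl d (z1 - z2). Proof. by rewrite clN clD. Qed.

Definition Cder (i : 'I_m) (c : C) := lift2 (fun a (x _ : As a) => der _ i x) c c.
Lemma derE i d z : Cder i (cl d z) = cl d (der _ i z).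
Proof. rewrite /Cder; apply: (lift2E (fun a (x _ : As a) => der _ i x)) => *; exact: phi_der. Qed.

Lemma Cder_deriv i : is_derivation (Cder i : C -> C).
Proof.
split.
- by move=> c1 c2; move: c1 c2; apply: C_ind2 => d x y; rewrite clD !derE clD; case: (der_deriv (As d) i) => ->.
- by move=> c1 c2; move: c1 c2; apply: C_ind2 => d x y; rewrite clM !derE !clM clD; case: (der_deriv (As d) i) => _ ->.
Qed.
Lemma Cder_comm i j (x : C) : Cder i (Cder j x) = Cder j (Cder i x).
Proof. by move: x; apply: C_ind1 => d z; rewrite !derE der_comm. Qed.

Definition CD : dring m := @DRing m C Cder Cder_deriv Cder_comm.

Definition jmap (a : I) : As a -> C := cl a.
Lemma jmap_zmod a : zmod_morphism (jmap a).
Proof. by move=> x y; rewrite /jmap clB. Qed.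
Lemma jmap_mon a : monoid_morphism (jmap a).
Proof. by split; [rewrite /jmap -cl1 | move=> x y; rewrite /jmap clM]. Qed.
HB.instance Definition _ a := GRing.isZmodMorphism.Build (As a) C (jmap a) (jmap_zmod a).
HB.instance Definition _ a := GRing.isMonoidMorphism.Build (As a) C (jmap a) (jmap_mon a).

Definition jr (a : I) : {rmorphism As a -> CD} := jmap a.

Lemma jr_dhom a : is_dhom (jr a).
Proof. by move=> i x; rewrite /= /jmap /= derE. Qed.
Lemma jr_compat a b (h : le a b) x : jr b (phi a b h x) = jr a x.
Proof. exact: cl_lift. Qed.

Section V.
Variables (A' : dring m) (iota : forall a, {rmorphism As a -> A'}).
Hypothesis Hiota : forall a b h x, iota b (phi a b h x) = iota a x.

Lemma iota_wd a x b y : cl a x = cl b y -> iota a x = iota b y.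
Proof. by move/clP=> [c [h1 [h2 E]]]; rewrite -(Hiota _ _ h1) E Hiota. Qed.

Definition vmap (c : C) : A' := let t := sval (pair_at c c) in iota (tag t) (tagged t).1.
Lemma vE d z : vmap (cl d z) = iota d z.
Proof. rewrite /vmap; case: (pair_at _ _) => t [E1 _] /=; apply: iota_wd; by rewrite -E1. Qed.

Lemma vmap_zmod : zmod_morphism vmap.
Proof. move=> c1 c2; move: c1 c2; apply: C_ind2 => d x y. by rewrite clB !vE rmorphB. Qed.
Lemma vmap_mon : monoid_morphism vmap.
Proof.
split; first by rewrite (cl1 i0) vE rmorph1.
move=> c1 c2; move: c1 c2; apply: C_ind2 => d x y. by rewrite clM !vE rmorphM.
Qed.
HB.instance Definition _ := GRing.isZmodMorphism.Build C A' vmap vmap_zmod.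
HB.instance Definition _ := GRing.isMonoidMorphism.Build C A' vmap vmap_mon.
Definition vr : {rmorphism CD -> A'} := vmap.
End V.

End Colim.
Arguments cl {m I le As phi} a x.
Arguments C_case {m I le As phi} c.
Arguments cl_same {m I le As phi} Hd Hs {d z1 z2} _.
Arguments cl0 {m I le As phi} Hd Hs d.
Arguments vE {m I le As phi} Hd Hs {A' iota} Hiota d z.
Arguments vr {m I le As phi} Hd Hs {A' iota} Hiota.
Arguments jr {m I le As phi} Hd Hs a.
Arguments jr_dhom {m I le As phi} Hd Hs a i x.
Arguments jr_compat {m I le As phi} Hd Hs {a b} h x.
Set Implicit Arguments.

Lemma dspec_eq (m : nat) (A : dring m) (p q : dSpec A) :
  (forall x, sval p x <-> sval q x) -> p = q.
Proof.
case: p q => P hP [Q hQ] /= H.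
have E : P = Q.
  by apply: functional_extensionality => x; apply: propositional_extensionality.
subst Q; f_equal; exact: proof_irrelevance.
Qed.

Lemma comap_cont (m : nat) (A B : dring m) (f : {rmorphism A -> B}) (hf : is_dhom f) :
  kcontinuous (comap hf).
Proof.
move=> Cl [E HE]; exists (fun y => exists x, E x /\ y = f x) => q.
rewrite HE /=; split.
- by move=> H y [x [Ex ->]]; apply: H.
- by move=> H x Ex; apply: H; exists x.
Qed.

Theorem lemma2p4 (m : nat) (A : dring m) (I : Type) (le : I -> I -> Prop)
  (As : I -> dring m) (phi : forall a b, le a b -> {rmorphism As a -> As b})
  (nu_ : forall a, {rmorphism A -> As a}) (hnu_ : forall a, is_dhom (nu_ a))
  (A' : dring m) (iota : forall a, {rmorphism As a -> A'})
  (nu : {rmorphism A -> A'}) (hnu : is_dhom nu) :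
  directed_set le ->
  direct_system phi ->
  (forall a b (h : le a b) x, phi a b h (nu_ a x) = nu_ b x) ->
  is_dcolimit phi iota ->
  (forall a x, nu x = iota a (nu_ a x)) ->
  (forall a, khomeo (comap (hnu_ a))) ->
  khomeo (comap hnu).
Proof.
move=> Hd Hs Hnu Hcol Hnuiota Hhomeo.
have Hd' := Hd; case: Hd' => [[i0] Hrefl Htrans Hub].
have Hs' := Hs; case: Hs' => [Hphid Hphiid Hphic].
case: Hcol => Hiotad Hiotac Huniv.
have [u [hu uE _]] := Huniv _ (jr Hd Hs) (jr_dhom Hd Hs) (fun a b => @jr_compat _ _ _ _ _ Hd Hs a b).
have [u0 [_ _ u0uniq]] := Huniv _ iota Hiotad Hiotac.
have Hsurj : forall y : A', exists a x, y = iota a x.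
  move=> y.
  have E1 := u0uniq (vr Hd Hs Hiotac \o u)%FUN.
  have E2 := u0uniq idfun.
  have [a [x Ex]] := C_case (u y).
  exists a, x.
  rewrite -[LHS]/(idfun y) E2 // -E1 /=.
    by rewrite Ex (vE Hd Hs Hiotac).
  by move=> b z; rewrite uE /= (vE Hd Hs Hiotac).
have Hker : forall a x, iota a x = 0 -> exists b (h : le a b), phi a b h x = 0.
  move=> a x /(f_equal u); rewrite uE rmorph0 (cl0 Hd Hs a) => /(cl_same Hd Hs) [b [h E]].
  by exists b, h; rewrite E rmorph0.
have Hcommon : forall y1 y2 : A', exists c x1 x2, y1 = iota c x1 /\ y2 = iota c x2.
  move=> y1 y2; have [a [x1 ->]] := Hsurj y1; have [b [x2 ->]] := Hsurj y2.
  have [c [hac hbc]] := Hub a b.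
  by exists c, (phi a c hac x1), (phi b c hbc x2); rewrite !Hiotac.
have hs : forall a, {h : dSpec A -> dSpec (As a) | [/\ cancel (comap (hnu_ a)) h,
    cancel h (comap (hnu_ a)), kcontinuous (comap (hnu_ a)) & kcontinuous h]}.
  by move=> a; apply: constructive_indefinite_description; exact: Hhomeo.
pose H a := sval (hs a).
have HK1 : forall a, cancel (comap (hnu_ a)) (H a) by move=> a; case: (svalP (hs a)).
have HK2 : forall a, cancel (H a) (comap (hnu_ a)) by move=> a; case: (svalP (hs a)).
have HC : forall a, kcontinuous (H a) by move=> a; case: (svalP (hs a)).
have F1 : forall p a b (h : le a b) x, sval (H b p) (phi a b h x) <-> sval (H a p) x.
  move=> p a b h x.
  have E : comap (Hphid a b h) (H b p) = H a p.
    rewrite -[LHS](HK1 a); congr (H a _).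
    apply: dspec_eq => y /=; rewrite Hnu.
    by rewrite -{2}(HK2 b p).
  by rewrite -E.
have Qchar : forall p a x, (exists b z, iota a x = iota b z /\ sval (H b p) z) <-> sval (H a p) x.
  move=> p a x; split; last by move=> hx; exists a, x.
  case=> b [z [Ez hz]].
  have [c [hac hbc]] := Hub a b.
  have : iota c (phi a c hac x - phi b c hbc z) = 0 by rewrite rmorphB !Hiotac Ez subrr.
  case/Hker => d [hcd]; rewrite rmorphB !(Hphic _ _ _ _ _ (Htrans _ _ _ hac hcd)) //.
  rewrite !(Hphic _ _ _ _ _ (Htrans _ _ _ hbc hcd)) // => /eqP; rewrite subr_eq0 => /eqP Exz.
  apply/(F1 p a d (Htrans _ _ _ hac hcd)); rewrite Exz; exact/F1.
pose Q p (y : A') := exists b z, y = iota b z /\ sval (H b p) z.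
have Qprime : forall p, is_dprime (Q p).
  move=> p; split; first split.
  - rewrite -(rmorph0 (iota i0)); apply/Qchar.
    by case: (svalP (H i0 p)) => [[]].
  - move=> y1 y2; have [c [x1 [x2 [-> ->]]]] := Hcommon y1 y2.
    rewrite -rmorphD => /Qchar h1 /Qchar h2; apply/Qchar.
    case: (svalP (H c p)) => [[_ PD _ _ _] _]; exact: PD.
  - move=> a y; have [c [x1 [x2 [-> ->]]]] := Hcommon a y.
    rewrite -rmorphM => /Qchar h; apply/Qchar.
    case: (svalP (H c p)) => [[_ _ PM _ _] _]; exact: PM.
  - rewrite -(rmorph1 (iota i0)) => /Qchar.
    by case: (svalP (H i0 p)) => [[_ _ _ P1 _] _].
  - move=> y1 y2; have [c [x1 [x2 [-> ->]]]] := Hcommon y1 y2.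
    rewrite -rmorphM => /Qchar h.
    case: (svalP (H c p)) => [[_ _ _ _ PP] _].
    by case: (PP _ _ h) => hh; [left|right]; apply/Qchar.
  - move=> i y [b [z [-> hz]]]; rewrite -Hiotad; apply/Qchar.
    case: (svalP (H b p)) => [_ Pd]; exact: Pd.
pose Psi p : dSpec A' := exist _ (Q p) (Qprime p).
exists Psi; split.
- move=> q; apply: dspec_eq => y /=.
  have [a [x ->]] := Hsurj y.
  apply: iff_trans (Qchar _ _ _) _.
  have E : comap hnu q = comap (hnu_ a) (comap (Hiotad a) q).
    by apply: dspec_eq => z /=; rewrite (Hnuiota a).
  by rewrite E HK1.
- move=> p; apply: dspec_eq => x /=.
  rewrite (Hnuiota i0); apply: iff_trans (Qchar _ _ _) _.
  by rewrite -{2}(HK2 i0 p).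
- exact: comap_cont.
- move=> D [E HE].
  pose Fw (a : I) (F : A -> Prop) := forall p,
    (forall x, E (iota a x) -> sval (H a p) x) <-> (forall z, F z -> sval p z).
  exists (fun z => exists a F, Fw a F /\ F z) => p.
  rewrite HE /=; split.
  + move=> hD z [a [F [hF Fz]]].
    apply: (proj1 (hF p)) Fz => x Ex; apply/Qchar; exact: hD.
  + move=> hz y Ey; have [a [x Eyx]] := Hsurj y; subst y.
    apply/Qchar.
    have Kc : kclosed (fun r : dSpec (As a) => forall x, E (iota a x) -> sval r x).
      by exists (fun x => E (iota a x)).
    have [F hF] := HC a _ Kc.
    apply: (proj2 (hF p)) _ x Ey => z Fz; apply: hz; exists a, F; split => //.
Qed.
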